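(* Let $\mathcal G=(V_{\min},V_{\max},E,w,\lambda)$ be a discounted payoff game, let $\sigma$ be a joint strategy, and let $\nu$ be an optimal solution for $f_\sigma$, i.e. a basis valuation of $H$ that minimises $f_\sigma$ over all solutions of $H$. Then: (1) if $\sigma$ is co-optimal, then $f_\sigma(\nu)=0$; (2) if $\nu$ defines strategies for both players and these strategies are the ones given by $\sigma$ (i.e. for every $v\in V$ the inequation $I_{(v,\sigma(v))}$ holds with equality at $\nu$), then $\sigma$ is co-optimal and $\nu=\mathrm{val}(\mathcal G)$.
   Context: A discounted payoff game (DPG) is a tuple $\mathcal G=(V_{\min},V_{\max},E,w,\lambda)$ where $V=V_{\min}\cup V_{\max}$ is a finite set of vertices partitioned into disjoint sets $V_{\min}$ (controlled by player Min) and $V_{\max}$ (controlled by player Max), $E\subseteq V\times V$ is such that every vertex has at least one outgoing edge, $w:E\to\mathbb R$ is a weight function and $\lambda:E\to[0,1)$ a discount function (write $w_e,\lambda_e$). The outcome of an infinite play $e_0e_1e_2\ldots$ (with $e_i=(v_i,v_{i+1})\in E$) is $\sum_{i\ge0}w_{e_i}\prod_{j<i}\lambda_{e_j}$. A joint strategy is a map $\sigma:V\to V$ with $(v,\sigma(v))\in E$ for all $v$; its restrictions to $V_{\min}$ and $V_{\max}$ are positional strategies of Min and Max. $\mathrm{val}(\sigma)(v)$ is the outcome of the unique play from $v$ following $\sigma$. The value of the game is $\mathrm{val}(\mathcal G)(v)=\sup_{\sigma_{\max}}\inf_{\sigma_{\min}}$ of the outcome of the play from $v$ (over positional strategies; these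 games are positionally determined). A joint strategy $\sigma$ is co-optimal iff $\mathrm{val}(\sigma)=\mathrm{val}(\mathcal G)$. $H$ is the system of inequations over unknowns $x\in\mathbb R^V$ containing, for each edge $e=(v,v')$, the inequation $I_e$: $x(v)\ge w_e+\lambda_e x(v')$ if $v\in V_{\max}$ and $x(v)\le w_e+\lambda_e x(v')$ if $v\in V_{\min}$. For a valuation $x$ and edge $(v,v')$, $\mathsf{offset}(x,(v,v'))=x(v)-(w_{(v,v')}+\lambda_{(v,v')}x(v'))$ if $v\in V_{\max}$ and $(w_{(v,v')}+\lambda_{(v,v')}x(v'))-x(v)$ otherwise. For a joint strategy $\sigma$, $f_\sigma(x)=\sum_{v\in V}\mathsf{offset}(x,(v,\sigma(v)))$. A basis of $H$ is a set of $|V|$ inequations of $H$ whose equality versions have a unique common solution; if that solution satisfies all of $H$ it is called the (basis) valuation of that basis. A valuation $x$ defines strategies for both players if every vertex $v$ has an outgoing edge $e$ such that $I_e$ holds with equality at $x$. *)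

(* Defs.v *)
From HB Require Import structures.
From mathcomp Require Import all_boot all_order all_algebra.
From mathcomp Require Import all_classical all_reals all_analysis.
Set Implicit Arguments. Unset Strict Implicit. Unset Printing Implicit Defensive.
Import Order.TTheory GRing.Theory Num.Theory.
Local Open Scope classical_set_scope.
Local Open Scope ring_scope.

(* A discounted payoff game on the finite vertex type V.
   isMax v = true  <-> v \in V_max ;  isMax v = false <-> v \in V_min.
   edge v v' <-> (v,v') \in E.  w, lam are the weight and discount
   functions (only their values on edges matter). *)
Record DPG (R : realType) (V : finType) := {
  isMax : pred V;
  edge : rel V;
  w : V -> V -> R;
  lam : V -> V -> R;
  edge_total : forall v, exists v', edge v v';
  lam_ge0 : forall v v', edge v v' -> 0 <= lam v v';
  lam_lt1 : forall v v', edge v v' -> lam v v' < 1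
}.

Section DPGdefs.
Context {R : realType} {V : finType} (G : DPG R V).

Definition is_joint_strategy (sigma : V -> V) : Prop :=
  forall v, edge G v (sigma v).

Definition play (sigma : V -> V) (v : V) (i : nat) : V := iter i sigma v.

Definition val_strat (sigma : V -> V) (v : V) : R :=
  limn (fun n : nat => \sum_(i < n)
     (w G (play sigma v i) (play sigma v i.+1) *
      \prod_(j < i) lam G (play sigma v j) (play sigma v j.+1))).

Definition combine (s1 s2 : V -> V) : V -> V :=
  fun v => if isMax G v then s1 v else s2 v.

(* value of the game: sup over positional Max strategies of inf over positional
   Min strategies (positional strategies of a player = restrictions of joint
   strategies to that player's vertices). *)
Definition val_game (v : V) : R :=
  sup [set r | exists s1, is_joint_strategy s1 /\
     r = inf [set r' | exists s2, is_joint_strategy s2 /\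
                 r' = val_strat (combine s1 s2) v]].

Definition co_optimal (sigma : V -> V) : Prop :=
  forall v, val_strat sigma v = val_game v.

Definition ineq_holds (x : V -> R) (v v' : V) : Prop :=
  if isMax G v then w G v v' + lam G v v' * x v' <= x v
  else x v <= w G v v' + lam G v v' * x v'.

Definition ineq_tight (x : V -> R) (v v' : V) : Prop :=
  x v = w G v v' + lam G v v' * x v'.

Definition solves_H (x : V -> R) : Prop :=
  forall v v', edge G v v' -> ineq_holds x v v'.

Definition offset (x : V -> R) (v v' : V) : R :=
  if isMax G v then x v - (w G v v' + lam G v v' * x v')
  else (w G v v' + lam G v v' * x v') - x v.

Definition f_sigma (sigma : V -> V) (x : V -> R) : R :=
  \sum_(v : V) offset x v (sigma v).

(* B (a set of edges = a set of inequations of H) is a basis whose equality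
   versions have x as their unique common solution *)
Definition basis_with_solution (B : {set V * V}) (x : V -> R) : Prop :=
  [/\ forall e, e \in B -> edge G e.1 e.2,
      #|B| = #|V|,
      forall e, e \in B -> ineq_tight x e.1 e.2 &
      forall y : V -> R, (forall e, e \in B -> ineq_tight y e.1 e.2) -> y = x].

Definition basis_valuation (x : V -> R) : Prop :=
  (exists B, basis_with_solution B x) /\ solves_H x.

Definition optimal_for (sigma : V -> V) (x : V -> R) : Prop :=
  basis_valuation x /\ forall y, solves_H y -> f_sigma sigma x <= f_sigma sigma y.

End DPGdefs.

(* Main.v *)
Require Import Defs.
From HB Require Import structures.
From mathcomp Require Import all_boot all_order all_algebra.
From mathcomp Require Import all_classical all_reals all_analysis.
From mathcomp Require Import ring lra.
Import Order.TTheory GRing.Theory Num.Theory.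
Import numFieldNormedType.Exports.
Local Open Scope classical_set_scope.
Local Open Scope ring_scope.
Section Aux.
Context {R : realType}.

Lemma core_le (a l x : nat -> R) : (forall i, 0 <= l i) ->
  (forall i, x i <= a i + l i * x i.+1) -> forall n,
  x 0%N <= \sum_(i < n) a i * \prod_(j < i) l j + (\prod_(j < n) l j) * x n.
Proof.
move=> l0 H; elim=> [|n IH]; first by rewrite big_ord0 big_ord0 add0r mul1r.
have P0 : 0 <= \prod_(j < n) l j by apply: prodr_ge0.
apply: le_trans IH _; rewrite big_ord_recr big_ord_recr /= -addrA lerD2l.
apply: le_trans (ler_wpM2l P0 (H n)) _.
by rewrite mulrDr mulrA [_ * a n]mulrC.
Qed.

Lemma core_ge (a l x : nat -> R) : (forall i, 0 <= l i) ->
  (forall i, a i + l i * x i.+1 <= x i) -> forall n,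
  \sum_(i < n) a i * \prod_(j < i) l j + (\prod_(j < n) l j) * x n <= x 0%N.
Proof.
move=> l0 H; elim=> [|n IH]; first by rewrite big_ord0 big_ord0 add0r mul1r.
have P0 : 0 <= \prod_(j < n) l j by apply: prodr_ge0.
apply: le_trans IH; rewrite big_ord_recr big_ord_recr /= -addrA lerD2l.
apply: le_trans (ler_wpM2l P0 (H n)).
by rewrite mulrDr mulrA [_ * a n]mulrC.
Qed.

Lemma prod_le_q (l : nat -> R) q : (forall i, 0 <= l i <= q) -> forall n,
  \prod_(j < n) l j <= q ^+ n.
Proof.
move=> H n; rewrite -[in leRHS](card_ord n) -prodr_const.
by apply: ler_prod => i _; exact: H.
Qed.

End Aux.
Section Game.
Context {R : realType} {V : finType} (G : DPG R V).

Definition qG : R := \big[Num.max/0]_(e : V * V | edge G e.1 e.2) lam G e.1 e.2.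
Definition MG : R := \sum_(e : V * V) `|w G e.1 e.2|.

Lemma qG_ge0 : 0 <= qG.
Proof.
rewrite /qG; elim/big_ind: _ => //= [a b Ha Hb|e He]; first by rewrite le_max Ha.
exact: lam_ge0.
Qed.

Lemma qG_lt1 : qG < 1.
Proof.
rewrite /qG; elim/big_ind: _ => //= [a b Ha Hb|e He]; first by rewrite gt_max Ha Hb.
exact: lam_lt1.
Qed.

Lemma lam_le_qG v v' : edge G v v' -> 0 <= lam G v v' <= qG.
Proof.
move=> E; rewrite lam_ge0 //= /qG (bigD1 (v, v')) //= le_max lexx //.
Qed.

Lemma w_le_MG v v' : `|w G v v'| <= MG.
Proof.
rewrite /MG (bigD1 (v, v')) //= lerDl; exact: sumr_ge0.
Qed.

Lemma MG_ge0 : 0 <= MG.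
Proof. exact: sumr_ge0. Qed.

Definition Ssum (tau : V -> V) (v : V) (n : nat) : R :=
  \sum_(i < n) (w G (play tau v i) (play tau v i.+1) *
      \prod_(j < i) lam G (play tau v j) (play tau v j.+1)).

Lemma val_strat_Ssum tau v : val_strat G tau v = limn (Ssum tau v).
Proof. by []. Qed.

Lemma play_edge tau v i : is_joint_strategy G tau ->
  edge G (play tau v i) (play tau v i.+1).
Proof. by move=> J; rewrite /play iterS; apply: J. Qed.

Lemma normq : `|qG| < 1.
Proof. by rewrite ger0_norm ?qG_ge0 ?qG_lt1. Qed.

Lemma Ssum_cvg tau v : is_joint_strategy G tau -> cvgn (Ssum tau v).
Proof.
move=> J.
set u := fun i : nat => w G (play tau v i) (play tau v i.+1) *
      \prod_(j < i) lam G (play tau v j) (play tau v j.+1).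
have -> : Ssum tau v = series u.
  by apply: funext => n; rewrite /series /= big_mkord.
apply: normed_cvg.
apply: (@series_le_cvg _ _ (geometric MG qG)).
- by move=> n; exact: normr_ge0.
- by move=> n; rewrite /geometric /= mulr_ge0 ?MG_ge0 ?exprn_ge0 ?qG_ge0.
- move=> n; rewrite /geometric /= /u normrM.
  have P0 : 0 <= \prod_(j < n) lam G (play tau v j) (play tau v j.+1).
    by apply: prodr_ge0 => j _; apply: lam_ge0; apply: play_edge.
  rewrite (ger0_norm P0); apply: ler_pM; [exact: normr_ge0 | exact: P0 | exact: w_le_MG |].
  apply: (prod_le_q (fun j => lam G (play tau v j) (play tau v j.+1))) => i.
  exact/lam_le_qG/play_edge.
- exact: is_cvg_geometric_series normq.
Qed.


Lemma sum_abs_le (x : V -> R) u : `|x u| <= \sum_u' `|x u'|.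
Proof. by rewrite (bigD1 u) //= lerDl; exact: sumr_ge0. Qed.

Lemma Px_bound tau v (x : V -> R) n : is_joint_strategy G tau ->
  `|(\prod_(j < n) lam G (play tau v j) (play tau v j.+1)) * x (play tau v n)|
    <= geometric (\sum_u `|x u|) qG n.
Proof.
move=> J; rewrite /geometric /= normrM mulrC.
have P0 : 0 <= \prod_(j < n) lam G (play tau v j) (play tau v j.+1).
  by apply: prodr_ge0 => j _; apply: lam_ge0; apply: play_edge.
rewrite (ger0_norm P0); apply: ler_pM; [exact: normr_ge0 | exact: P0 | exact: sum_abs_le |].
apply: (prod_le_q (fun j => lam G (play tau v j) (play tau v j.+1))) => i.
exact/lam_le_qG/play_edge.
Qed.

Lemma geo_lim (a c : R) (s : nat -> R) : cvgn s ->
  (forall n, c - geometric a qG n <= s n) -> c <= limn s.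
Proof.
move=> cs H.
have cg : (fun n => c - geometric a qG n) @ \oo --> c - 0.
  apply: cvgB; [exact: cvg_cst | exact: cvg_geometric normq].
rewrite -[c]subr0 -(cvg_lim _ cg) //.
apply: ler_lim => //; first by apply/cvg_ex; exists (c - 0).
exact: nearW.
Qed.

Lemma geo_lim' (a c : R) (s : nat -> R) : cvgn s ->
  (forall n, s n <= c + geometric a qG n) -> limn s <= c.
Proof.
move=> cs H.
have cg : (fun n => c + geometric a qG n) @ \oo --> c + 0.
  apply: cvgD; [exact: cvg_cst | exact: cvg_geometric normq].
rewrite -[c]addr0 -(cvg_lim _ cg) //.
apply: ler_lim => //; first by apply/cvg_ex; exists (c + 0).
exact: nearW.
Qed.

Lemma cmp_le tau (x : V -> R) : is_joint_strategy G tau ->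
  (forall v, x v <= w G v (tau v) + lam G v (tau v) * x (tau v)) ->
  forall v, x v <= val_strat G tau v.
Proof.
move=> J H v; rewrite val_strat_Ssum.
apply: (geo_lim (\sum_u `|x u|)); first exact: Ssum_cvg.
move=> n.
have := core_le (fun i => w G (play tau v i) (play tau v i.+1))
  (fun i => lam G (play tau v i) (play tau v i.+1))
  (fun i => x (play tau v i)) _ _ n.
have := Px_bound tau v x n J.
rewrite /Ssum /=.
have hl : forall i, 0 <= lam G (play tau v i) (tau (play tau v i)).
  by move=> i; apply: lam_ge0; apply: J.
move=> h1 /(_ hl (fun i => H _)) h2.
set S := (\sum_(i < n) _) in h2 *; set P := (\prod_(j < n) _) in h1 h2.
have := ler_norm (P * x (play tau v n)); lra.
Qed.

Lemma cmp_ge tau (x : V -> R) : is_joint_strategy G tau ->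
  (forall v, w G v (tau v) + lam G v (tau v) * x (tau v) <= x v) ->
  forall v, val_strat G tau v <= x v.
Proof.
move=> J H v; rewrite val_strat_Ssum.
apply: (geo_lim' (\sum_u `|x u|)); first exact: Ssum_cvg.
move=> n.
have := core_ge (fun i => w G (play tau v i) (play tau v i.+1))
  (fun i => lam G (play tau v i) (play tau v i.+1))
  (fun i => x (play tau v i)) _ _ n.
have := Px_bound tau v x n J.
rewrite /Ssum /=.
have hl : forall i, 0 <= lam G (play tau v i) (tau (play tau v i)).
  by move=> i; apply: lam_ge0; apply: J.
move=> h1 /(_ hl (fun i => H _)) h2.
set S := (\sum_(i < n) _) in h2 *; set P := (\prod_(j < n) _) in h1 h2.
have := ler_norm (- (P * x (play tau v n))); rewrite normrN; lra.
Qed.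


Lemma Ssum_rec tau v n :
  Ssum tau v n.+1 = w G v (tau v) + lam G v (tau v) * Ssum tau (tau v) n.
Proof.
rewrite /Ssum big_ord_recl /= big_ord0 mulr1 big_distrr /=; congr (_ + _).
apply: eq_bigr => i _; rewrite big_ord_recl /=.
rewrite /play /= -!iterSr /=.
rewrite mulrCA add0n; congr (_ * (_ * _)).
by apply: eq_bigr => j _; rewrite add0n -iterSr iterS.
Qed.

Lemma val_rec tau v : is_joint_strategy G tau ->
  val_strat G tau v = w G v (tau v) + lam G v (tau v) * val_strat G tau (tau v).
Proof.
move=> J; rewrite !val_strat_Ssum; apply: cvg_lim => //.
rewrite -cvg_shiftS.
have -> : (fun n => Ssum tau v n.+1) =
   (fun n => w G v (tau v) + lam G v (tau v) * Ssum tau (tau v) n).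
  by apply: funext => n; rewrite Ssum_rec.
apply: cvgD; first exact: cvg_cst.
exact: (cvgMl_tmp (a := lam G v (tau v)) (Ssum_cvg tau (tau v) J)).
Qed.


Definition KG : R := MG / (1 - qG).

Lemma KG_ge0 : 0 <= KG.
Proof. by rewrite /KG divr_ge0 ?MG_ge0 // subr_ge0 ltW // qG_lt1. Qed.

Lemma KG_eq : KG * (1 - qG) = MG.
Proof. by rewrite /KG mulfVK // subr_eq0 eq_sym lt_eqF // qG_lt1. Qed.

Lemma val_lb tau v : is_joint_strategy G tau -> - KG <= val_strat G tau v.
Proof.
move=> J; apply: (cmp_le tau (fun=> - KG)) => // u.
have [l0 lq] := andP (lam_le_qG _ _ (J u)).
have h1 := w_le_MG u (tau u).
have h2 : - `|w G u (tau u)| <= w G u (tau u) by rewrite lerNl ler_normr lexx orbT.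
have h3 := ler_wpM2l KG_ge0 lq.
have h4 := KG_eq.
have h5 := KG_ge0.
lra.
Qed.

Lemma combine_joint s1 s2 : is_joint_strategy G s1 -> is_joint_strategy G s2 ->
  is_joint_strategy G (combine G s1 s2).
Proof. by move=> J1 J2 u; rewrite /combine; case: ifP. Qed.

Lemma combine_same s : combine G s s = s.
Proof. by apply: funext => u; rewrite /combine if_same. Qed.

Lemma key tau (x : V -> R) : is_joint_strategy G tau -> solves_H G x ->
  (forall v, ineq_tight G x v (tau v)) ->
  (forall v, val_strat G tau v = x v) /\ val_game G = x.
Proof.
move=> J Hx T.
have vx : forall v, val_strat G tau v = x v.
  move=> v; apply/eqP; rewrite eq_le; apply/andP; split.
    by apply: cmp_ge => // u; rewrite -T.
  by apply: cmp_le => // u; rewrite -T.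
split => //; apply: funext => v; rewrite /val_game.
set B := fun s1 : V -> V => [set r' : R | exists s2 : V -> V, is_joint_strategy G s2 /\ r' = val_strat G (combine G s1 s2) v].
have Blb s1 : is_joint_strategy G s1 -> has_lbound (B s1).
  move=> J1; exists (- KG) => _ [s2 [J2 ->]].
  exact/val_lb/combine_joint.
have Binf s1 s2 : is_joint_strategy G s1 -> is_joint_strategy G s2 ->
    inf (B s1) <= val_strat G (combine G s1 s2) v.
  by move=> J1 J2; apply: (ge_inf (Blb s1 J1)); exists s2.
have infx : inf (B tau) = x v.
  apply/eqP; rewrite eq_le; apply/andP; split.
    by rewrite -(vx v) -{2}(combine_same tau); apply: Binf.
  apply: lb_le_inf; first by exists (val_strat G (combine G tau tau) v); exists tau.
  move=> _ [s2 [J2 ->]]; apply: cmp_le; first exact: combine_joint.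
  move=> u; rewrite /combine; case: ifP => hu; first by rewrite -T.
  by have := Hx u (s2 u) (J2 u); rewrite /ineq_holds hu.
have ub : ubound [set r | exists s1, is_joint_strategy G s1 /\ r = inf (B s1)] (x v).
  move=> _ [s1 [J1 ->]]; apply: le_trans (Binf s1 tau J1 J) _.
  apply: cmp_ge; first exact: combine_joint.
  move=> u; rewrite /combine; case: ifP => hu; last by rewrite -T.
  by have := Hx u (s1 u) (J1 u); rewrite /ineq_holds hu.
apply/eqP; rewrite eq_le; apply/andP; split.
  by apply: ge_sup => //; exists (x v); exists tau.
by apply: ub_le_sup; [exists (x v) | exists tau].
Qed.

End Game.
HB.instance Definition _ (R : realType) (m n : nat) := Complete.on 'M[R]_(m, n).

Section Bell.
Context {R : realType} {V : finType} (G : DPG R V).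

Definition fx (x : 'rV[R]_#|V|) : V -> R := fun v => x ord0 (enum_rank v).
Definition tox (y : V -> R) : 'rV[R]_#|V| := \row_i y (enum_val i).

Lemma fx_tox y : fx (tox y) = y.
Proof. by apply: funext => v; rewrite /fx /tox mxE enum_rankK. Qed.

Definition s0 (v : V) : V := xchoose (edge_total G v).
Definition gval (y : V -> R) v v' := w G v v' + lam G v v' * y v'.

Definition best (y : V -> R) (v : V) : V :=
  if isMax G v then Order.arg_max (s0 v) (edge G v) (gval y v)
  else Order.arg_min (s0 v) (edge G v) (gval y v).

Lemma best_spec y v : edge G v (best y v) /\
  forall v', edge G v v' ->
   (if isMax G v then gval y v v' <= gval y v (best y v)
    else gval y v (best y v) <= gval y v v').
Proof.
rewrite /best; case: ifP => _.
  by case: arg_maxP => [|i Pi Hi]; [exact: xchooseP | split => // v' /Hi].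
by case: arg_minP => [|i Pi Hi]; [exact: xchooseP | split => // v' /Hi].
Qed.

Definition Tb (y : V -> R) (v : V) : R := gval y v (best y v).

Lemma Tb_lip y1 y2 D v : (forall u, `|y1 u - y2 u| <= D) ->
  `|Tb y1 v - Tb y2 v| <= qG G * D.
Proof.
move=> HD.
have E c : edge G v c -> `|gval y1 v c - gval y2 v c| <= qG G * D.
  move=> ec; have -> : gval y1 v c - gval y2 v c = lam G v c * (y1 c - y2 c).
    by rewrite /gval; ring.
  have [l0 lq] := andP (lam_le_qG G _ _ ec).
  rewrite normrM (ger0_norm l0); apply: ler_pM => //; exact: HD.
have [e1 H1] := best_spec y1 v; have [e2 H2] := best_spec y2 v.
rewrite /Tb.
set a := best y1 v in e1 H1 *; set b := best y2 v in e2 H2 *.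
have Ea := E a e1; have Eb := E b e2.
move: Ea Eb; rewrite !ler_norml => /andP[Ea1 Ea2] /andP[Eb1 Eb2].
apply/andP; split.
- case hv: (isMax G v).
  + have := H1 b e2; rewrite hv; lra.
  + have := H2 a e1; rewrite hv; lra.
- case hv: (isMax G v).
  + have := H2 a e1; rewrite hv; lra.
  + have := H1 b e2; rewrite hv; lra.
Qed.

Definition Tm (x : 'rV[R]_#|V|) : 'rV[R]_#|V| := tox (Tb (fx x)).

Lemma entry_le (x : 'rV[R]_#|V|) i : `|x ord0 i| <= `|x|.
Proof.
rewrite (_ : `|x| = mx_norm x) // mx_normrE (bigD1 (ord0, i)) //= le_max lexx //.
Qed.

Lemma norm_le (x : 'rV[R]_#|V|) c : 0 <= c -> (forall i, `|x ord0 i| <= c) -> `|x| <= c.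
Proof.
move=> c0 H; rewrite (_ : `|x| = mx_norm x) // mx_normrE.
elim/big_ind: _ => // [a b Ha Hb|[i j] _]; first by rewrite ge_max Ha Hb.
by rewrite /= (ord1 i); exact: H.
Qed.

End Bell.

HB.instance Definition _ (R : realType) (V : finType) (G : DPG R V) :=
  isFun.Build _ _ setT setT (Tm G) (fun _ _ => I).

Section Fix.
Context {R : realType} {V : finType} (G : DPG R V).

Lemma exists_opt : exists tau (x : V -> R), is_joint_strategy G tau /\
  solves_H G x /\ (forall v, ineq_tight G x v (tau v)).
Proof.
have q0 : 0 <= qG G := qG_ge0 G.
have ctr : is_contraction (Tm G : {fun [set: 'rV[R]_#|V|] >-> [set: 'rV[R]_#|V|]}).
  exists (NngNum q0); split; first exact: qG_lt1.
  move=> [x1 x2] _ /=.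
  apply: norm_le; first by rewrite mulr_ge0 // normr_ge0.
  move=> i.
  have -> : (Tm G x1 - Tm G x2) ord0 i = Tm G x1 ord0 i - Tm G x2 ord0 i.
    by rewrite !mxE.
  rewrite /Tm /tox !mxE.
  apply: Tb_lip => u; rewrite /fx.
  have := entry_le (x1 - x2) (enum_rank u).
  have -> : (x1 - x2) ord0 (enum_rank u) = x1 ord0 (enum_rank u) - x2 ord0 (enum_rank u).
    by rewrite !mxE.
  done.
have [p _ fp] := @banach_fixed_point R 'rV[R]_#|V| setT (Tm G) ctr closedT (ex_intro _ 0 I).
set x := fx p.
have xT : forall v, x v = Tb G x v.
  by move=> v; rewrite /x {1}fp /= /Tm fx_tox.
clearbody x.
exists (best G x), x; split; last split.
- by move=> v; have [] := best_spec G x v.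
- rewrite /solves_H => u u' e; rewrite /ineq_holds; have [_ H] := best_spec G x u.
  have := H u' e; rewrite [x u]xT /Tb /gval; case: ifP => //.
- by move=> v; rewrite /ineq_tight {1}xT.
Qed.

End Fix.

Theorem theorem3p3 (R : realType) (V : finType) (G : DPG R V)
    (sigma : V -> V) (nu : V -> R) :
  is_joint_strategy G sigma ->
  optimal_for G sigma nu ->
  (co_optimal G sigma -> f_sigma G sigma nu = 0) /\
  ((forall v, ineq_tight G nu v (sigma v)) ->
     co_optimal G sigma /\ nu = val_game G).
Proof.
move=> J [[_ Hnu] Hmin]; split.
- move=> co.
  have [tau [x [Jt [Hx Tx]]]] := exists_opt G.
  have [_ vg] := key G tau x Jt Hx Tx.
  have ts : forall v, ineq_tight G x v (sigma v).
    move=> v; rewrite /ineq_tight -vg -!co; exact: val_rec G sigma v J.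
  have f0 : f_sigma G sigma x = 0.
    rewrite /f_sigma big1 // => v _; rewrite /offset -(ts v); case: ifP => _; exact: subrr.
  have fge : 0 <= f_sigma G sigma nu.
    rewrite /f_sigma; apply: sumr_ge0 => v _.
    have := Hnu v (sigma v) (J v); rewrite /offset /ineq_holds.
    by case: ifP => _; rewrite subr_ge0.
  apply/eqP; rewrite eq_le fge andbT -f0; exact: Hmin x Hx.
- move=> T; have [vs vg] := key G sigma nu J Hnu T; split => // v.
  by rewrite vs vg.
Qed.
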